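(* Let $N\ge 2$, $r(k)=N-1-k$ on $\{0,\dots,N-1\}$, and call a map $\mu$ on partial $N\times N$ arrays admissible if it has the following form: there is a permutation $\pi$ of $\{0,\dots,N-1\}$ with $\pi\circ r=r\circ\pi$ and $\pi(0)\in\{0,N-1\}$ and a $\rho\in\{\pi, r\circ\pi\}$ such that, for a partial array $A$ whose first row is a full permutation of $\{0,\dots,N-1\}$, $T(A)[\pi(i)][\rho(j)]=A[i][j]$ (cell $(\pi(i),\rho(j))$ filled iff $(i,j)$ filled) and $\mu(A)=\tau\circ T(A)$, where $\tau$ is the unique symbol permutation making the first row of $\tau\circ T(A)$ equal to $0,1,\dots,N-1$. Let $\sim$ be the equivalence relation on the set $\mathcal H_N$ of hourglass designs of order $N$ generated by $H\sim\mu(H)$ for admissible $\mu$. For $H\in\mathcal H_N$ let $n(H)$ be the number of normalized diagonal Latin squares of order $N$ agreeing with $H$ on all filled cells of $H$. Then for each $\sim$-class $C$, $n$ is constant on $C$, and the number of normalized diagonal Latin squares of order $N$ equals $\sum_{C} |C|\cdot n(H_C)$, where the sum runs over all $\sim$-classes $C$ of $\mathcal H_N$ and $H_C\in C$ is an arbitrary representative.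
   Context: A diagonal Latin square of order $N$ is an $N\times N$ array with entries in $\{0,\dots,N-1\}$ such that every row, every column, the main diagonal (cells $(i,i)$) and the main antidiagonal (cells $(i,N-1-i)$) each contain every element of $\{0,\dots,N-1\}$ exactly once; rows and columns are indexed $0,\dots,N-1$. It is normalized if its first row (row $0$) is $0,1,\dots,N-1$. A hourglass design of order $N$ is a partial $N\times N$ array in which exactly the cells of row $0$, row $N-1$, the main diagonal and the main antidiagonal are filled with symbols from $\{0,\dots,N-1\}$, the first row is $0,1,\dots,N-1$, and no symbol occurs twice among the filled cells of any row, any column, the main diagonal, or the main antidiagonal. *)

(* Defs.v *)
From mathcomp Require Import all_boot all_order all_algebra all_fingroup.
Set Implicit Arguments. Unset Strict Implicit. Unset Printing Implicit Defensive.

(* Indices and symbols are 'I_N = {0,...,N-1}; r(k) = N-1-k is rev_ord. *)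

(* Partial arrays: None = empty cell. *)
Definition parray (N : nat) := 'M[option 'I_N]_N.
Definition farray (N : nat) := 'M['I_N]_N.

Definition diag_latin N (L : farray N) : bool :=
  [&& [forall i, forall s, #|[pred j | L i j == s]| == 1],
      [forall j, forall s, #|[pred i | L i j == s]| == 1],
      [forall s, #|[pred i | L i i == s]| == 1] &
      [forall s, #|[pred i | L i (rev_ord i) == s]| == 1]].

Definition normalized N (L : farray N) : bool :=
  [forall i, forall j, (val i == 0) ==> (L i j == j)].

Definition ndls N (L : farray N) : bool := diag_latin L && normalized L.

Definition hg_cell N (i j : 'I_N) : bool :=
  [|| val i == 0, val i == N.-1, i == j | j == rev_ord i].

Definition hourglass N (H : parray N) : bool :=
  [&& [forall i, forall j, (H i j != None) == hg_cell i j],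
      [forall i, forall j, (val i == 0) ==> (H i j == Some j)],
      [forall i, forall j, forall j', ((j != j') && (H i j != None)) ==> (H i j != H i j')],
      [forall j, forall i, forall i', ((i != i') && (H i j != None)) ==> (H i j != H i' j)],
      [forall i, forall i', ((i != i') && (H i i != None)) ==> (H i i != H i' i')] &
      [forall i, forall i', ((i != i') && (H i (rev_ord i) != None)) ==>
                             (H i (rev_ord i) != H i' (rev_ord i'))]].

Definition adm_perm N (pi : {perm 'I_N}) : bool :=
  [forall k, pi (rev_ord k) == rev_ord (pi k)] &&
  [forall i, (val i == 0) ==> ((val (pi i) == 0) || (val (pi i) == N.-1))].

Definition rho_of N (pi : {perm 'I_N}) (b : bool) (j : 'I_N) : 'I_N :=
  if b then rev_ord (pi j) else pi j.

(* H' = mu(H) for an admissible mu: H'[pi i][rho j] = tau(H[i][j]) (with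
   empty cells preserved), where tau is a symbol permutation making the
   first row of H' equal to 0,...,N-1 (such tau is unique). *)
Definition adm_step N (H H' : parray N) : bool :=
  [exists pi : {perm 'I_N}, exists b : bool, exists tau : {perm 'I_N},
    [&& adm_perm pi,
        [forall i, forall j, H' (pi i) (rho_of pi b j) == omap tau (H i j)] &
        [forall i, forall k, (val i == 0) ==> (H' i k == Some k)]]].

Definition hg_edge N (H H' : parray N) : bool :=
  [&& hourglass H, hourglass H' & adm_step H H' || adm_step H' H].

Definition hg_sim N (H H' : parray N) : bool := connect (@hg_edge N) H H'.

Definition hg_set N : {set parray N} := [set H | hourglass H].

Definition hg_classes N : {set {set parray N}} :=
  [set [set H' in hg_set N | hg_sim H H'] | H in hg_set N].

Definition agrees N (H : parray N) (L : farray N) : bool :=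
  [forall i, forall j, forall s, (H i j == Some s) ==> (L i j == s)].

Definition n_compl N (H : parray N) : nat :=
  #|[set L : farray N | ndls L && agrees H L]|.

(* Main.v *)
Require Import Defs.
From mathcomp Require Import all_boot all_order all_algebra all_fingroup.
Set Implicit Arguments. Unset Strict Implicit. Unset Printing Implicit Defensive.

Lemma card_inj_pred (T : finType) (f : T -> T) (hf : injective f) (P : pred T) :
  #|[pred j | P (f j)]| = #|P|.
Proof.
rewrite -(card_image hf [pred j | P (f j)]); apply: eq_card => x.
have [g fg gf] := injF_bij hf.
by rewrite -{1}(gf x) (mem_image hf) !inE gf.
Qed.

Lemma card1_eq (T : finType) (P : pred T) x y : #|P| == 1 -> P x -> P y -> x = y.
Proof.
move/eqP=> h Px Py; have: #|P| <= 1 by rewrite h.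
by move/card_le1_eqP; apply.
Qed.

Lemma teq N (t : {perm 'I_N}) x s : (t x == s) = (x == (t^-1)%g s).
Proof. by apply/eqP/eqP => [<-|->]; rewrite ?permK ?permKV. Qed.

Definition tr N (p q : 'I_N -> 'I_N) (t : {perm 'I_N}) (L : farray N) : farray N :=
  (\matrix_(i, j) t (L (p i) (q j)))%R.

Lemma tr_latin N (p q : 'I_N -> 'I_N) t L : injective p -> injective q ->
  (forall k, p (rev_ord k) = rev_ord (p k)) ->
  ((forall k, q k = p k) \/ (forall k, q k = rev_ord (p k))) ->
  diag_latin L -> diag_latin (tr p q t L).
Proof.
move=> ip iq pr hq /and4P [/forallP R /forallP C /forallP D /forallP A].
apply/and4P; split; apply/forallP.
- move=> i; apply/forallP => s.
  rewrite (eq_card (B := [pred j | (fun k => L (p i) k == (t^-1)%g s) (q j)])); last first.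
    by move=> j; rewrite !inE mxE teq.
  by rewrite (card_inj_pred iq (fun k => L (p i) k == (t^-1)%g s)) //; move/forallP: (R (p i)); apply.
- move=> j; apply/forallP => s.
  rewrite (eq_card (B := [pred i | (fun k => L k (q j) == (t^-1)%g s) (p i)])); last first.
    by move=> i; rewrite !inE mxE teq.
  by rewrite (card_inj_pred ip (fun k => L k (q j) == (t^-1)%g s)) //; move/forallP: (C (q j)); apply.
- move=> s; case: hq => hq.
    rewrite (eq_card (B := [pred i | (fun k => L k k == (t^-1)%g s) (p i)])); last first.
      by move=> i; rewrite !inE mxE teq hq.
    by rewrite (card_inj_pred ip (fun k => L k k == (t^-1)%g s)) //; apply: D.
  rewrite (eq_card (B := [pred i | (fun k => L k (rev_ord k) == (t^-1)%g s) (p i)])); last first.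
    by move=> i; rewrite !inE mxE teq hq.
  by rewrite (card_inj_pred ip (fun k => L k (rev_ord k) == (t^-1)%g s)) //; apply: A.
- move=> s; case: hq => hq.
    rewrite (eq_card (B := [pred i | (fun k => L k (rev_ord k) == (t^-1)%g s) (p i)])); last first.
      by move=> i; rewrite !inE mxE teq hq pr.
    by rewrite (card_inj_pred ip (fun k => L k (rev_ord k) == (t^-1)%g s)) //; apply: A.
  rewrite (eq_card (B := [pred i | (fun k => L k k == (t^-1)%g s) (p i)])); last first.
    by move=> i; rewrite !inE mxE teq hq pr rev_ordK.
  by rewrite (card_inj_pred ip (fun k => L k k == (t^-1)%g s)) //; apply: D.
Qed.

Lemma hg_row0 N (H : parray N) : hourglass H -> forall i j, val i == 0 -> H i j = Some j.
Proof.
case/andP=> _ /andP [/forallP h0 _] i j hi.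
by move/forallP: (h0 i) => /(_ j) /implyP /(_ hi) /eqP.
Qed.

Lemma agree_norm N (H : parray N) L : hourglass H -> agrees H L -> normalized L.
Proof.
move=> hH /forallP ag; apply/forallP => i; apply/forallP => j; apply/implyP => hi.
move/forallP: (ag i) => /(_ j) /forallP /(_ j) /implyP; apply.
by rewrite (hg_row0 hH j hi).
Qed.

Section Step.
Variables (N : nat) (pi : {perm 'I_N}) (b : bool).
Hypothesis hc : forall k, pi (rev_ord k) = rev_ord (pi k).

Definition qinv (j : 'I_N) : 'I_N := (pi^-1)%g (if b then rev_ord j else j).

Lemma piV_rev k : (pi^-1)%g (rev_ord k) = rev_ord ((pi^-1)%g k).
Proof. by apply: (perm_inj (s := pi)); rewrite permKV hc permKV. Qed.

Lemma rq j : rho_of pi b (qinv j) = j.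
Proof. by rewrite /rho_of /qinv; case: b; rewrite permKV ?rev_ordK. Qed.

Lemma qr j : qinv (rho_of pi b j) = j.
Proof. by rewrite /rho_of /qinv; case: b; rewrite ?rev_ordK permK. Qed.

Lemma qinv_inj : injective qinv.
Proof. by move=> x y /perm_inj; case: b => //; apply: rev_ord_inj. Qed.

Lemma qinv_rho : qinv =1 rho_of (pi^-1)%g b.
Proof. by move=> j; rewrite /qinv /rho_of; case: b; rewrite ?piV_rev. Qed.
End Step.

Lemma step_le N (H H' : parray N) : adm_step H H' -> hourglass H' -> n_compl H <= n_compl H'.
Proof.
case/existsP=> pi /existsP [b /existsP [tau /and3P [hp /forallP hH _]]] hH'.
case/andP: hp => /forallP hc0 _.
have hc : forall k, pi (rev_ord k) = rev_ord (pi k) by move=> k; apply/eqP.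
pose f := tr (pi^-1)%g (qinv pi b) tau.
have fL : forall L i j, f L (pi i) (rho_of pi b j) = tau (L i j).
  by move=> L i j; rewrite mxE permK qr.
have finj : injective f.
  move=> L1 L2 e; apply/matrixP=> i j; apply: (perm_inj (s := tau)).
  by rewrite -!fL e.
rewrite /n_compl -(card_imset _ finj); apply: subset_leq_card.
apply/subsetP => y /imsetP [L]; rewrite inE => /andP [/andP [dl nl] ag] ->.
have ag' : agrees H' (f L).
  apply/forallP => i; apply/forallP => j; apply/forallP => s; apply/implyP.
  have -> : i = pi ((pi^-1)%g i) by rewrite permKV.
  have -> : j = rho_of pi b (qinv pi b j) by rewrite rq.
  rewrite fL; move/forallP: (hH ((pi^-1)%g i)) => /(_ (qinv pi b j)) /eqP ->.
  case e: (H _ _) => [s0|] //= /eqP [<-].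
  move/forallP: ag => /(_ ((pi^-1)%g i)) /forallP /(_ (qinv pi b j)) /forallP /(_ s0).
  by rewrite e eqxx /= => /eqP ->.
rewrite inE ag' andbT /ndls (agree_norm hH' ag') andbT.
apply: tr_latin => //.
- exact: perm_inj.
- exact: qinv_inj.
- exact: piV_rev.
- rewrite /qinv; case: (b); [right|left] => k //; exact: piV_rev.
Qed.

Lemma step_sym N (H H' : parray N) : adm_step H H' -> hourglass H -> adm_step H' H.
Proof.
case/existsP=> pi /existsP [b /existsP [tau /and3P [hp /forallP hH _]]] hHg.
case/andP: hp => /forallP hc0 /forallP h00.
have hc : forall k, pi (rev_ord k) = rev_ord (pi k) by move=> k; apply/eqP.
apply/existsP; exists (pi^-1)%g; apply/existsP; exists b; apply/existsP; exists (tau^-1)%g.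
apply/and3P; split.
- apply/andP; split; apply/forallP => k.
    by rewrite piV_rev.
  apply/implyP => hk; move/implyP: (h00 k) => /(_ hk) /orP [e|e].
    have E : pi k = k by apply: val_inj; rewrite (eqP e) (eqP hk).
    by rewrite -{1}E permK hk.
  have E : pi k = rev_ord k by apply: val_inj; rewrite (eqP e) /= (eqP hk) subn1.
  have -> : (pi^-1)%g k = rev_ord k.
    by apply: (perm_inj (s := pi)); rewrite permKV hc E rev_ordK.
  by rewrite /= (eqP hk) subn1 eqxx orbT.
- apply/forallP => i; apply/forallP => j.
  rewrite -(@qinv_rho _ _ b hc).
  have -> : H' i j = H' (pi ((pi^-1)%g i)) (rho_of pi b (qinv pi b j)) by rewrite rq permKV.
  move/forallP: (hH ((pi^-1)%g i)) => /(_ (qinv pi b j)) /eqP ->.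
  by case: (H _ _) => //= s; rewrite permK.
- apply/forallP => i; apply/forallP => k; apply/implyP => hi.
  by rewrite (hg_row0 hHg k hi).
Qed.

Lemma edge_eq N (H H' : parray N) : hg_edge H H' -> n_compl H = n_compl H'.
Proof.
case/and3P=> hH hH' /orP [s|s]; apply/eqP; rewrite eqn_leq.
  by rewrite (step_le s hH') (step_le (step_sym s hH) hH).
by rewrite (step_le s hH) (step_le (step_sym s hH') hH').
Qed.

Lemma sim_eq N (H H' : parray N) : hg_sim H H' -> n_compl H = n_compl H'.
Proof.
case/connectP=> p; elim: p H => [|H1 p IH] H /= ; first by move=> _ ->.
case/andP=> e pa E; rewrite (edge_eq e); exact: IH pa E.
Qed.

Definition restr N (L : farray N) : parray N :=
  (\matrix_(i, j) if hg_cell i j then Some (L i j) else None)%R.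

Lemma restr_hg N (L : farray N) : ndls L -> hourglass (restr L).
Proof.
case/andP=> /and4P [/forallP R /forallP C /forallP D /forallP A] /forallP nl.
apply/and5P; split; try apply/andP; try split; apply/forallP => i; try apply/forallP => j.
- by rewrite mxE; case: (hg_cell i j).
- apply/implyP => hi; rewrite mxE /hg_cell hi /=.
  by move/forallP: (nl i) => /(_ j) /implyP /(_ hi) /eqP ->.
- apply/forallP => j'; apply/implyP => /andP [nj]; rewrite !mxE.
  case: (hg_cell i j) => //= _; case: (hg_cell i j') => //=.
  apply: contra nj => /eqP [e]; apply/eqP.
  move/forallP: (R i) => /(_ (L i j)) h.
  by apply: (card1_eq h); rewrite /= ?e.
- apply/forallP => i'; apply/implyP => /andP [ni]; rewrite !mxE.
  case: (hg_cell j i) => //= _; case: (hg_cell i' i) => //=.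
  apply: contra ni => /eqP [e]; apply/eqP.
  move/forallP: (C i) => /(_ (L j i)) h.
  by apply: (card1_eq h); rewrite /= ?e.
- apply/implyP => /andP [ni]; rewrite !mxE /hg_cell !eqxx !orbT /=.
  move=> _; apply: contra ni => /eqP [e]; apply/eqP.
  move: (D (L i i)) => h.
  by apply: (card1_eq h); rewrite /= ?e.
- apply/implyP => /andP [ni]; rewrite !mxE /hg_cell !eqxx !orbT /=.
  move=> _; apply: contra ni => /eqP [e]; apply/eqP.
  move: (A (L i (rev_ord i))) => h.
  by apply: (card1_eq h); rewrite /= ?e.
Qed.

Lemma restr_agree N (L : farray N) : agrees (restr L) L.
Proof.
apply/forallP => i; apply/forallP => j; apply/forallP => s; apply/implyP.
by rewrite mxE; case: (hg_cell i j) => // /eqP [->].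
Qed.

Lemma agree_restr N (H : parray N) L : hourglass H -> agrees H L -> H = restr L.
Proof.
case/andP=> /forallP hc _ /forallP ag; apply/matrixP => i j; rewrite mxE.
move/forallP: (hc i) => /(_ j) /eqP <-.
case e: (H i j) => [s|] //=.
by move/forallP: (ag i) => /(_ j) /forallP /(_ s) /implyP; rewrite e eqxx => /(_ isT) /eqP ->.
Qed.

Lemma count1 N (L : farray N) : ndls L -> #|[set H in hg_set N | agrees H L]| = 1.
Proof.
move=> hL; rewrite (_ : [set H in hg_set N | agrees H L] = [set restr L]) ?cards1 //; apply/setP => H.
rewrite !inE; apply/andP/eqP => [[hH ag]|->]; first exact: agree_restr.
by rewrite restr_hg // restr_agree.
Qed.

Lemma card_as_sum (T : finType) (P : pred T) : #|[set x | P x]| = \sum_x (P x : nat).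
Proof.
rewrite -sum1_card big_mkcond; apply: eq_bigr => x _; rewrite inE; by case: (P x).
Qed.

Lemma total_count N : #|[set L : farray N | ndls L]| = \sum_(H in hg_set N) n_compl H.
Proof.
rewrite card_as_sum.
under [RHS]eq_bigr => H _ do rewrite /n_compl card_as_sum.
rewrite big_mkcond /= exchange_big /=; apply: eq_bigr => L _.
case: (boolP (ndls L)) => hL /=.
  rewrite -(count1 hL) card_as_sum [RHS]big_mkcond; apply: eq_bigr => H _.
  by case: (H \in hg_set N).
by rewrite big1.
Qed.

Lemma hg_edge_sym N : symmetric (@hg_edge N).
Proof. by move=> x y; rewrite /hg_edge andbCA orbC. Qed.

Lemma hg_part N : partition (hg_classes N) (hg_set N).
Proof.
apply: equivalence_partitionP => x y z _ _ _; split; first exact: connect0.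
have cs := sym_connect_sym (@hg_edge_sym N).
move=> hxy; apply/idP/idP => h.
  by apply: connect_trans h; rewrite /hg_sim cs.
exact: connect_trans hxy h.
Qed.

Theorem corollary1 (N : nat) (hN : 2 <= N) :
  (forall H H' : parray N, hourglass H -> hourglass H' -> hg_sim H H' ->
     n_compl H = n_compl H') /\
  (forall rep : {set parray N} -> parray N,
     (forall C, C \in hg_classes N -> rep C \in C) ->
     #|[set L : farray N | ndls L]| =
       \sum_(C in hg_classes N) #|C| * n_compl (rep C)).
Proof.
split; first by move=> H H' _ _; exact: sim_eq.
move=> rep hrep; rewrite total_count.
have /and3P [/eqP cov triv _] := hg_part N.
rewrite -cov (big_trivIset _ triv); apply: eq_bigr => C hC.
rewrite -sum_nat_const; apply: eq_bigr => H hH.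
have hr := hrep C hC.
case/imsetP: hC => x _ E; rewrite E !inE in hH hr.
case/andP: hH => _ h1; case/andP: hr => _ h2.
by rewrite E -(sim_eq h1) (sim_eq h2).
Qed.
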